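(* Let $\mathcal{G}$ be an undirected weighted graph (nonzero real weights, possibly negative) with $c$ connected components, and suppose $L(\mathcal{G})$ has $n_+$ positive, $n_-$ negative and $n_0$ zero eigenvalues. Then for any spanning forest $\mathcal{F}$ with cycle subgraph $\mathcal{C}$, the symmetric matrix $R_{(\mathcal{F},\mathcal{C})}WR_{(\mathcal{F},\mathcal{C})}^T$ has $n_+$ positive, $n_-$ negative and $n_0-c$ zero eigenvalues.
   Context: A weighted graph $\mathcal{G}=(\mathcal{V},\mathcal{E},\mathcal{W})$ has weights $\mathcal{W}:\mathcal{E}\to\mathbb{R}\setminus\{0\}$ collected in the diagonal matrix $W$. With an arbitrary edge orientation, the incidence matrix $E$ has in the column of edge $(i,j)$ entry $+1$ in row $i$, $-1$ in row $j$, $0$ elsewhere; $L(\mathcal{G})=EWE^T$. A spanning forest $\mathcal{F}$ is an acyclic subgraph containing a spanning tree of each component; $\mathcal{C}$ consists of the remaining edges; edges ordered so $E=[E_{\mathcal{F}}\ E_{\mathcal{C}}]$ and $W$ correspondingly. $L_e(\mathcal{F})=E_{\mathcal{F}}^TE_{\mathcal{F}}$ and $R_{(\mathcal{F},\mathcal{C})}=[\,I\ \ L_e(\mathcal{F})^{-1}E_{\mathcal{F}}^TE_{\mathcal{C}}\,]$. *)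

(* Defs.v *)
From HB Require Import structures.
From mathcomp Require Import all_boot all_order all_algebra.
Set Implicit Arguments. Unset Strict Implicit. Unset Printing Implicit Defensive.
Import Order.TTheory GRing.Theory Num.Theory.
Local Open Scope ring_scope.

(* A graph on vertices 'I_n with m edges; edge e is oriented from src e to dst e. *)
Section Graph.
Variables (n m : nat) (src dst : 'I_m -> 'I_n).

Definition joins (e : 'I_m) (x y : 'I_n) : bool :=
  ((src e == x) && (dst e == y)) || ((src e == y) && (dst e == x)).

Definition adj (S : pred 'I_m) : rel 'I_n :=
  fun x y => [exists e, S e && joins e x y].

Definition has_cycle (S : pred 'I_m) : Prop :=
  exists (p : nat) (es : 'I_p.+1 -> 'I_m) (vs : 'I_p.+1 -> 'I_n),
    [/\ injective es, injective vs &
        forall i, S (es i) /\ joins (es i) (vs i) (vs (ordS i))].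

Definition incidence (R : pzRingType) : 'M[R]_(n, m) :=
  \matrix_(i, j) ((i == src j)%:R - (i == dst j)%:R).

End Graph.

(* A (square) matrix A over a real closed field has np positive, nn negative
   and nz zero eigenvalues (counted with algebraic multiplicity, all eigenvalues
   being real). *)
Definition eig_inertia (R : rcfType) (d : nat) (A : 'M[R]_d) (np nn nz : nat) : Prop :=
  exists s : seq R,
    [/\ char_poly A = \prod_(x <- s) ('X - x%:P),
        count (fun x => 0 < x) s = np,
        count (fun x => x < 0) s = nn &
        count (fun x => x == 0) s = nz].

(* Main.v *)
Require Import Defs.
From HB Require Import structures.
From mathcomp Require Import all_boot all_order all_algebra.
From mathcomp Require Import complex zify.
Import Order.TTheory GRing.Theory Num.Theory.
Local Open Scope ring_scope.

Module MG2.
Set Implicit Arguments. Unset Strict Implicit. Unset Printing Implicit Defensive.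
Local Open Scope ring_scope.

Lemma joins_inv n m (src dst : 'I_m -> 'I_n) e x y x' y' :
  joins src dst e x y -> joins src dst e x' y' ->
  (x = x' /\ y = y') \/ (x = y' /\ y = x').
Proof.
rewrite /joins => /orP[]/andP[/eqP-> /eqP->] /orP[]/andP[/eqP h1 /eqP h2];
 subst; by [left|right].
Qed.

Section Cycle.
Variables (R : fieldType) (n m : nat) (src dst : 'I_m -> 'I_n).
Hypothesis loopfree : forall e, src e != dst e.

Definition inc (v : 'I_n) e := (src e == v) || (dst e == v).
Definition oth e (v : 'I_n) := if src e == v then dst e else src e.

Variable y : 'cV[R]_m.
Hypothesis Ey : incidence src dst R *m y = 0.
Definition Tg e := y e 0 != 0.

Lemma other_edge v e : Tg e -> inc v e -> exists e', [&& Tg e', e' != e & inc v e'].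
Proof.
move=> Te ive; have [/existsP [e' h]|H] := boolP [exists e', [&& Tg e', e' != e & inc v e']].
  by exists e'.
exfalso; move/negP: H => H.
have := congr1 (fun M : 'M[R]_(n,1) => M v 0) Ey; rewrite !mxE (bigD1 e) //= big1 ?addr0.
  rewrite !mxE; move: ive; rewrite /inc.
  have := loopfree e.
  case: (eqVneq (src e) v) => [<-|ns] /=.
    by move=> /negbTE -> _; rewrite subr0 mul1r; apply/eqP.
  move=> _ /eqP <-; rewrite eqxx sub0r mulN1r => /eqP; rewrite oppr_eq0.
  by apply/negP.
move=> e' ne'; rewrite mxE.
case: (boolP (Tg e')) => Te'; last by move/negPn: Te' => /eqP ->; rewrite mulr0.
have ni : ~~ inc v e'.
  apply/negP => ie; apply: H; apply/existsP; exists e'; by rewrite Te' ne' ie.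
move: ni; rewrite /inc negb_or => /andP[h1 h2].
by rewrite eq_sym (negbTE h1) eq_sym (negbTE h2) subrr mul0r.
Qed.

Definition nxt (s : 'I_n * 'I_m) : 'I_n * 'I_m :=
  let e' := odflt s.2 [pick e' | Tg e' && (e' != s.2) && inc s.1 e'] in
  (oth e' s.1, e').

Definition Inv (s : 'I_n * 'I_m) := Tg s.2 && inc s.1 s.2.

Lemma nxtP s : Inv s ->
  [/\ Inv (nxt s), (nxt s).2 != s.2 & joins src dst (nxt s).2 s.1 (nxt s).1].
Proof.
case: s => v e /andP[/= Te ie]; rewrite /nxt /=.
case: pickP => [e' /andP[/andP[Te' ne'] ie'] | H] /=; last first.
  have [e' /and3P[h1 h2 h3]] := other_edge Te ie.
  by move: (H e'); rewrite h1 h2 h3.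
split => //; rewrite /Inv /= ?Te' /= /inc /oth /joins.
  by case: ifP => _; apply/orP; [right|left].
move: ie'; rewrite /inc; case: eqP => [->|_] /=; first by rewrite !eqxx.
by move=> ->; rewrite eqxx.
Qed.

Local Close Scope ring_scope.
Lemma cycle_exists e0 : Tg e0 -> has_cycle src dst predT.
Proof.
move=> Te0.
pose s0 := (src e0, e0).
have I0 : Inv s0 by rewrite /Inv /= Te0 /inc eqxx.
pose st t := iter t nxt s0.
have Ist t : Inv (st t) by elim: t => //= t IH; case: (nxtP IH).
pose vt t := (st t).1; pose ed t := (st t).2.
have Hne t : ed t.+1 != ed t by case: (nxtP (Ist t)).
have Hj t : joins src dst (ed t.+1) (vt t) (vt t.+1) by case: (nxtP (Ist t)).
have [j0 Pj0] : exists j, has (fun i => vt i == vt j) (iota 0 j).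
  have : ~~ injectiveb (fun t : 'I_n.+1 => vt t).
    apply/negP => /injectiveP inj; have := @leq_card _ _ _ inj.
    by rewrite !card_ord ltnn.
  move/injectivePn => [t1 [t2 ne eq]].
  case: (ltngtP t1 t2) => [lt|lt|/val_inj eq']; last by rewrite eq' eqxx in ne.
    by exists t2; apply/hasP; exists (t1 : nat); rewrite ?mem_iota //= eq.
  by exists t1; apply/hasP; exists (t2 : nat); rewrite ?mem_iota //= eq.
case: (ex_minnP (ex_intro (fun j => has (fun i => vt i == vt j) (iota 0 j)) j0 Pj0)) => j /hasP; case=> i; rewrite mem_iota add0n => /andP[_ ltij] /eqP vij minj.
have dist (a b : nat) : a < j -> b < j -> vt a = vt b -> a = b.
  move=> aj bj vab; case: (ltngtP a b) => // lt.
    suff : j <= b by rewrite leqNgt bj.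
    by apply: minj; apply/hasP; exists a; rewrite ?mem_iota //= vab.
  suff : j <= a by rewrite leqNgt aj.
  by apply: minj; apply/hasP; exists b; rewrite ?mem_iota //= vab.
pose p := (j - i).-1.
have hp : p.+1 = j - i by rewrite /p prednK // subn_gt0.
pose vs (a : 'I_p.+1) := vt (i + a).
pose es (a : 'I_p.+1) := ed (i + a).+1.
have ordSv (a : 'I_p.+1) : a < p -> val (ordS a) = a.+1.
  by move=> ap; rewrite /= modn_small.
have ordSp (a : 'I_p.+1) : ~~ (a < p) -> val (ordS a) = 0%N.
  move=> ap; have /eqP ea : (a : nat) == p by rewrite eqn_leq -ltnS ltn_ord leqNgt ap.
  by rewrite /= ea modnn.
have ij (a : 'I_p.+1) : i + a < j.
  have h : (a : nat) < j - i by rewrite -hp ltn_ord.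
  by rewrite -(subnKC (ltnW ltij)) ltn_add2l.
have vsinj : injective vs.
  move=> a b /dist; move/(_ (ij a) (ij b)) => /addnI h; exact: val_inj.
have Jc a : joins src dst (es a) (vs a) (vs (ordS a)).
  have := Hj (i + a); rewrite /es /vs.
  case: (boolP (a < p)) => ap; first by rewrite ordSv // addnS.
  rewrite ordSp // addn0 vij.
  suff e : (i + a).+1 = j by rewrite e.
  have /eqP ea : (a : nat) == p by rewrite eqn_leq -ltnS ltn_ord leqNgt ap.
  by rewrite ea -addnS hp subnKC // ltnW.
exists p, es, vs; split; [|exact: vsinj|by move=> a; split; [exact: isT | exact: Jc]].
move=> a b eab; have Ja := Jc a; have Jb := Jc b; rewrite -eab in Jb.
have [[h1 h2]|[h1 h2]] := joins_inv Ja Jb; first exact: vsinj.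
move/vsinj: h1 => h1; move/vsinj: h2 => h2.
have cons (a' b' : 'I_p.+1) : a' < p -> ordS a' = b' -> es a' = es b' -> False.
  move=> ap <-; rewrite /es ordSv // addnS => e'.
  by have := Hne (i + a').+1; rewrite e' eqxx.
case: (boolP (a < p)) => ap; first by exfalso; exact: (cons a b ap h2 eab).
case: (boolP (b < p)) => bp; first by exfalso; exact: (cons b a bp (esym h1) (esym eab)).
apply: val_inj.
have := ltn_ord a; have := ltn_ord b; rewrite !ltnS => h3 h4.
by apply/eqP; rewrite eqn_leq (leq_trans h4) ?(leq_trans h3) // leqNgt.
Qed.

End Cycle.
Local Open Scope ring_scope.

Lemma incidence_free (R : fieldType) n m (src dst : 'I_m -> 'I_n) :
  (forall e, src e != dst e) -> ~ has_cycle src dst predT ->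
  row_free (incidence src dst R)^T.
Proof.
move=> lf nc; apply: inj_row_free => v hv; apply/rowP => e; rewrite mxE.
apply/eqP/negPn/negP => ne; apply: nc.
have Ey : incidence src dst R *m v^T = 0.
  by rewrite -[incidence _ _ _]trmxK -trmx_mul hv trmx0.
by apply: (cycle_exists lf Ey (e0 := e)); rewrite /Tg mxE.
Qed.

End MG2.
Import MG2.

Module MG1.
Set Implicit Arguments. Unset Strict Implicit. Unset Printing Implicit Defensive.
Local Open Scope ring_scope.

Section Rank.
Variables (R : fieldType) (n m : nat) (src dst : 'I_m -> 'I_n).
Local Notation E := (incidence src dst R).
Local Notation e := (adj src dst predT).

Lemma mulE_entry p (A : 'M[R]_(p, n)) i f :
  (A *m E) i f = A i (src f) - A i (dst f).
Proof.
rewrite !mxE.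
under eq_bigr do rewrite mxE mulrBr !mulr_natr.
rewrite sumrB (bigD1 (src f)) //= big1 ?addr0; last first.
  by move=> v /negbTE ->.
rewrite (bigD1 (dst f)) //= big1 ?addr0; last first.
  by move=> v /negbTE ->.
by rewrite !eqxx.
Qed.

Lemma adj_sym : symmetric e.
Proof.
move=> x y; rewrite /adj; apply/existsP/existsP => [][f /andP[_ h]]; exists f;
 by move: h; rewrite /joins orbC.
Qed.

Lemma csym : connect_sym e.
Proof. exact: sym_connect_sym adj_sym. Qed.

Lemma const_conn p (A : 'M[R]_(p, n)) i : A *m E = 0 ->
  forall a b, connect e a b -> A i a = A i b.
Proof.
move=> AE a b /connectP [q pq ->]; elim: q a pq => //= b' q IH a /andP[eab pq].
rewrite -IH //; move: eab => /existsP [f /andP[_ j]].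
have := congr1 (fun M : 'M[R]_(p, m) => M i f) AE; rewrite mulE_entry mxE.
move/eqP; rewrite subr_eq0 => /eqP.
by move: j; rewrite /joins => /orP[]/andP[/eqP-> /eqP->].
Qed.

Definition RT := [set v | roots e v].
Definition Ind : 'M[R]_(#|RT|, n) := \matrix_(i, v) (fingraph.root e v == enum_val i)%:R.
Definition Sel : 'M[R]_(n, #|RT|) := \matrix_(v, i) (v == enum_val i)%:R.

Lemma IndE : Ind *m E = 0.
Proof.
apply/matrixP => i f; rewrite mulE_entry !mxE.
suff -> : fingraph.root e (src f) = fingraph.root e (dst f) by rewrite subrr.
apply/fingraph.rootP; first exact: csym.
apply: connect1; apply/existsP; exists f; by rewrite /joins !eqxx.
Qed.

Lemma Ind_free : row_free Ind.
Proof.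
apply/row_freeP; exists Sel; apply/matrixP => i i'; rewrite !mxE.
rewrite (bigD1 (enum_val i')) //= big1 ?addr0; last first.
  by move=> v /negbTE ne; rewrite !mxE ne mulr0.
rewrite !mxE eqxx mulr1.
have : enum_val i' \in RT := enum_valP i'.
rewrite inE /roots => /eqP ->.
by rewrite (inj_eq enum_val_inj) eq_sym.
Qed.

Lemma ker_Ind : (kermx E == Ind)%MS.
Proof.
apply/andP; split; last by rewrite sub_kermx IndE.
apply/row_subP => i.
have : row i (kermx E) *m E = 0 by rewrite -row_mul mulmx_ker row0.
move: (row i (kermx E)) => x xE.
apply/submxP; exists (\row_j x 0 (enum_val j)); apply/rowP => v.
have rv : fingraph.root e v \in RT by rewrite inE; apply: roots_root; exact: csym.
rewrite !mxE (bigD1 (enum_rank_in rv (fingraph.root e v))) //= big1 ?addr0.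
  rewrite !mxE enum_rankK_in // eqxx mulr1.
  apply: (const_conn 0 xE); exact: connect_root.
move=> j ne; rewrite !mxE.
suff /negbTE -> : fingraph.root e v != enum_val j by rewrite mulr0.
apply: contra ne => /eqP h; apply/eqP; apply: enum_val_inj; by rewrite enum_rankK_in // h.
Qed.

Lemma rank_incidence : \rank E = (n - n_comp e predT)%N.
Proof.
have h := mxrank_ker E; rewrite (eqmx_rank ker_Ind) in h.
have : \rank Ind = #|RT| by apply/eqP; exact: Ind_free.
move=> hI; rewrite hI in h.
have -> : n_comp e predT = #|RT|.
  by apply: eq_card => v; rewrite !inE andbT.
by rewrite h subKn // rank_leq_row.
Qed.
End Rank.

End MG1.
Import MG1.

Module MG3.
Set Implicit Arguments. Unset Strict Implicit. Unset Printing Implicit Defensive.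
Local Open Scope ring_scope.

Section Span.
Variables (R : fieldType) (n k l : nat) (src dst : 'I_(k + l) -> 'I_n).
Local Notation E := (incidence src dst R).
Local Notation U := (lsubmx E)^T.

Definition dv (a : 'I_n) : 'rV[R]_n := delta_mx 0 a.

Lemma rowEt f : row f E^T = dv (src f) - dv (dst f).
Proof. by apply/rowP => v; rewrite !mxE eqxx /=. Qed.

Lemma rowU (i : 'I_k) : row i U = dv (src (lshift l i)) - dv (dst (lshift l i)).
Proof. by rewrite -rowEt; apply/rowP => v; rewrite !mxE. Qed.

Lemma conn_sub a b : connect (adj src dst (fun e => (e < k)%N)) a b ->
  (dv a - dv b <= U)%MS.
Proof.
move=> /connectP [q pq ->]; elim: q a pq => /= [|c q IH] a.
  by rewrite subrr sub0mx.
move=> /andP[/existsP [f /andP[fk j]] pq].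
have -> : dv a - dv (last c q) = (dv a - dv c) + (dv c - dv (last c q)).
  by rewrite addrA subrK.
apply: addmx_sub (IH _ pq).
have fe : f = lshift l (Ordinal fk) by apply: val_inj.
have := row_sub (Ordinal fk) U; rewrite rowU -fe.
move: j; rewrite /joins => /orP[]/andP[/eqP-> /eqP->] //.
move=> h; have -> : dv a - dv c = - (dv c - dv a) by rewrite opprB.
by rewrite eqmx_opp.
Qed.

Lemma EC_sub :
  (forall x y, connect (adj src dst (fun e => (e < k)%N)) x y =
               connect (adj src dst predT) x y) ->
  ((rsubmx E)^T <= U)%MS.
Proof.
move=> hc; apply/row_subP => j.
have -> : row j (rsubmx E)^T = row (rshift k j) E^T by apply/rowP => v; rewrite !mxE.
rewrite rowEt; apply: conn_sub; rewrite hc; apply: connect1.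
by apply/existsP; exists (rshift k j); rewrite /joins !eqxx.
Qed.
End Span.

End MG3.
Import MG3.

Module MLA.
Set Implicit Arguments. Unset Strict Implicit. Unset Printing Implicit Defensive.
Local Open Scope ring_scope.
Local Open Scope sesquilinear_scope.

Section LA.
Variable C : numClosedFieldType.

Definition qf n (A : 'M[C]_n) (x : 'rV[C]_n) : C := (x *m A *m x ^t*) 0 0.

Definition posfam (eps : C) n r (A : 'M[C]_n) (V : 'M[C]_(r, n)) :=
  forall z : 'rV_r, z != 0 -> 0 < eps * qf A (z *m V).
Definition npfam (eps : C) n s (A : 'M[C]_n) (W : 'M[C]_(s, n)) :=
  row_free W /\ forall z : 'rV_s, eps * qf A (z *m W) <= 0.

Lemma ct_mul m n p (A : 'M[C]_(m, n)) (B : 'M[C]_(n, p)) :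
  (A *m B) ^t* = B ^t* *m A ^t*.
Proof. by rewrite trmx_mul map_mxM. Qed.

Lemma qf0 n (A : 'M[C]_n) : qf A 0 = 0.
Proof. by rewrite /qf !mul0mx mxE. Qed.

Lemma compare eps n r s (A : 'M[C]_n) (V : 'M_(r, n)) (W : 'M_(s, n)) :
  posfam eps A V -> npfam eps A W -> (r + s <= n)%N.
Proof.
move=> pV [fW nW].
have fV : row_free V.
  apply: inj_row_free => z zV; apply/eqP/negP => /negP /pV.
  by rewrite zV qf0 mulr0 ltxx.
have cap0 : (V :&: W)%MS = 0.
  apply/eqP; rewrite -submx0; apply/row_subP => i.
  have h1 : (row i (V :&: W) <= V)%MS := submx_trans (row_sub _ _) (capmxSl _ _).
  have h2 : (row i (V :&: W) <= W)%MS := submx_trans (row_sub _ _) (capmxSr _ _).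
  move: (row i _) h1 h2 => x /submxP [z ->] /submxP [z' e].
  rewrite submx0; apply/negPn/negP => nz.
  have zn : z != 0 by apply: contra nz => /eqP ->; rewrite mul0mx.
  have := pV z zn; rewrite e => h; have := nW z'.
  by move=> h'; have := lt_le_trans h h'; rewrite ltxx.
have := mxrank_disjoint_sum cap0.
rewrite (eqP fV) (eqP fW) => <-; exact: rank_leq_col.
Qed.

Section Transfer.
Variables (n k : nat) (A : 'M[C]_n) (M : 'M[C]_k) (B : 'M[C]_(n, k)).
Hypothesis hA : A = B *m M *m B ^t*.

Lemma qf_tr x : qf A x = qf M (x *m B).
Proof. by rewrite /qf hA ct_mul !mulmxA. Qed.

Lemma posfam_fwd eps r (V : 'M_(r, n)) : posfam eps A V -> posfam eps M (V *m B).
Proof. by move=> pV z /pV; rewrite qf_tr mulmxA. Qed.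

Hypothesis hG : B ^t* *m B \in unitmx.

Lemma posfam_bwd eps r (V : 'M_(r, k)) :
  posfam eps M V -> posfam eps A (V *m invmx (B ^t* *m B) *m B ^t*).
Proof.
move=> pV z /pV; rewrite qf_tr.
by rewrite !mulmxA -(mulmxA _ (B ^t*)) -(mulmxA _ _ (B ^t* *m B)) mulVmx // mulmx1.
Qed.
End Transfer.

Lemma char_poly_sim n (P D : 'M[C]_n) : P \in unitmx ->
  char_poly (invmx P *m D *m P) = char_poly D.
Proof.
move=> Pu; rewrite /char_poly /char_poly_mx !map_mxM.
set Pp := map_mx polyC P; set Pi := map_mx polyC (invmx P).
have PiPp : Pi *m Pp = 1%:M by rewrite -map_mxM mulVmx // map_mx1.
have e : 'X%:M - Pi *m map_mx polyC D *m Pp = Pi *m ('X%:M - map_mx polyC D) *m Pp.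
  rewrite mulmxBr mulmxBl; congr (_ - _).
  by rewrite -mulmxA -scalar_mxC mulmxA PiPp mul1mx.
rewrite e !det_mulmx mulrC mulrA -det_mulmx.
by rewrite -map_mxM mulmxV // map_mx1 det1 mul1r.
Qed.

Lemma qf_diag n (d : 'rV[C]_n) w :
  qf (diag_mx d) w = \sum_j d 0 j * (w 0 j * (w 0 j)^*).
Proof.
rewrite /qf mul_mx_diag !mxE; apply: eq_bigr => j _; rewrite !mxE.
by rewrite mulrCA mulrA.
Qed.

Definition Sel n (T : {set 'I_n}) : 'M[C]_(#|T|, n) :=
  \matrix_(i, j) (enum_val i == j)%:R.

Lemma Sel_diag n (T : {set 'I_n}) (d : 'rV[C]_n) :
  Sel T *m diag_mx d *m (Sel T) ^t* = diag_mx (\row_i d 0 (enum_val i)).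
Proof.
apply/matrixP => i i'; rewrite mul_mx_diag !mxE.
rewrite (bigD1 (enum_val i)) //= big1 ?addr0; last first.
  by move=> j /negbTE ne; rewrite !mxE eq_sym ne mul0r mul0r.
rewrite !mxE !eqxx mul1r (inj_eq enum_val_inj) eq_sym.
by case: eqP => _; rewrite ?conjC1 ?conjC0 ?mulr1 ?mulr0.
Qed.


Section Spec.
Variables (n : nat) (A : 'M[C]_n).
Hypothesis hA : A \is hermsymmx.
Variable eps : C.
Hypothesis heps : eps \is Num.real.

Local Notation P := (spectralmx A).
Local Notation d := (spectral_diag A).

Lemma Aeq : A = invmx P *m diag_mx d *m P.
Proof. exact/orthomx_spectralP/hermitian_normalmx. Qed.

Lemma dreal j : d 0 j \is Num.real.
Proof. by have /mxOverP := hermitian_spectral_diag_real hA; apply. Qed.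

Lemma qf_spec w : qf A (w *m P) = qf (diag_mx d) w.
Proof.
have Pu := spectral_unitarymx A; have e := Aeq.
move: (spectralmx A) (spectral_diag A) Pu e => P0 d0 Pu e.
rewrite /qf e (invmx_unitary Pu) ct_mul !mulmxA.
by rewrite !mulmxtVK.
Qed.

Lemma qf_sel (T : {set 'I_n}) z :
  qf A (z *m (Sel T *m P)) = \sum_i d 0 (enum_val i) * (z 0 i * (z 0 i)^*).
Proof.
rewrite mulmxA qf_spec /qf ct_mul !mulmxA -(mulmxA _ _ (Sel T ^t*)).
rewrite -(mulmxA z (Sel T)) (mulmxA (Sel T)) Sel_diag -[LHS]/(qf _ z) qf_diag.
by apply: eq_bigr => i _; rewrite mxE.
Qed.

Definition Tp := [set j | 0 < eps * d 0 j].

Lemma fam_pos : posfam eps A (Sel Tp *m P).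
Proof.
move=> z /rV0Pn [i0 zi0]; rewrite qf_sel mulr_sumr (bigD1 i0) //=.
have pos (i : 'I_#|Tp|) : 0 < eps * d 0 (enum_val i).
  by have := enum_valP i; rewrite inE.
apply: ltr_pwDl; first by rewrite mulrA mulr_gt0 ?pos // mul_conjC_gt0.
apply: sumr_ge0 => i _; rewrite mulrA mulr_ge0 ?mul_conjC_ge0 //.
exact: ltW.
Qed.

Lemma Sel_free (T : {set 'I_n}) : row_free (Sel T).
Proof.
apply/row_freeP; exists (diag_mx (const_mx 1) *m (Sel T) ^t*).
rewrite mulmxA Sel_diag -diag_const_mx; congr diag_mx.
by apply/rowP => i; rewrite !mxE.
Qed.

Lemma fam_np : npfam eps A (Sel (~: Tp) *m P).
Proof.
split.
  by rewrite /row_free mxrankMfree ?(eqP (Sel_free _)) // row_free_unit spectral_unit.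
move=> z; rewrite qf_sel mulr_sumr; apply: sumr_le0 => i _.
have : enum_val i \in ~: Tp := enum_valP i.
rewrite !inE => h; rewrite mulrA mulr_le0_ge0 ?mul_conjC_ge0 //.
by rewrite real_leNgt ?h // ?rpredM ?dreal // real0.
Qed.

Lemma card_Tp (s : seq C) : char_poly A = \prod_(x <- s) ('X - x%:P) ->
  #|Tp| = count (fun x => 0 < eps * x) s.
Proof.
move=> hs.
have : perm_eq s [seq d 0 j | j <- enum 'I_n].
  apply: prod_XsubC_eq; rewrite -hs {1}Aeq char_poly_sim ?spectral_unit //.
  rewrite char_poly_trig ?diag_mx_is_trig // big_map big_enum /=.
  by apply: eq_bigr => j _; rewrite mxE eqxx mulr1n.
move/permP => ->; rewrite count_map enumT cardsE cardE /enum_mem size_filter.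
by apply: eq_count => j.
Qed.

Lemma char_poly_spec :
  char_poly A = \prod_(j < n) ('X - (spectral_diag A 0 j)%:P).
Proof.
have Pu := spectral_unit A; have e := Aeq.
move: (spectralmx A) (spectral_diag A) Pu e => P0 d0 Pu e.
rewrite e char_poly_sim // char_poly_trig ?diag_mx_is_trig //.
by apply: eq_bigr => j _; rewrite mxE eqxx mulr1n.
Qed.

Lemma count_ge (s : seq C) r (V : 'M_(r, n)) :
  char_poly A = \prod_(x <- s) ('X - x%:P) ->
  posfam eps A V -> (r <= count (fun x => (0 < eps * x)%R) s)%N.
Proof.
move=> hs pV; have := compare pV fam_np.
have := cardsC Tp; rewrite (card_Tp hs) => h.
move=> H; have : (r + #|~: Tp| <= count (fun x => (0 < eps * x)%R) s + #|~: Tp|)%N by rewrite h card_ord.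
by rewrite leq_add2r.
Qed.

Lemma fam_count (s : seq C) : char_poly A = \prod_(x <- s) ('X - x%:P) ->
  exists V : 'M_(count (fun x => 0 < eps * x) s, n), posfam eps A V.
Proof. by move=> hs; rewrite -(card_Tp hs); exists (Sel Tp *m P); exact: fam_pos. Qed.

End Spec.

Lemma inertia_transfer n k (A : 'M[C]_n) (M : 'M[C]_k) (B : 'M[C]_(n, k))
  (sA sM : seq C) (eps : C) :
  A \is hermsymmx -> M \is hermsymmx -> eps \is Num.real ->
  A = B *m M *m B ^t* -> B ^t* *m B \in unitmx ->
  char_poly A = \prod_(x <- sA) ('X - x%:P) ->
  char_poly M = \prod_(x <- sM) ('X - x%:P) ->
  count (fun x => 0 < eps * x) sA = count (fun x => 0 < eps * x) sM.
Proof.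
move=> hA hM he eA hG cA cM; apply/eqP; rewrite eqn_leq; apply/andP; split.
  have [V pV] := fam_count hA eps cA.
  have h1 := posfam_fwd eA pV. have h2 := count_ge hM he cM h1. exact h2.
have [V pV] := fam_count hM eps cM.
have h1 := posfam_bwd eA hG pV. exact (count_ge hA he cA h1).
Qed.

End LA.

End MLA.
Import MLA.

Module MRL.
Set Implicit Arguments. Unset Strict Implicit. Unset Printing Implicit Defensive.
Local Open Scope ring_scope.
Local Open Scope sesquilinear_scope.

Section Real.
Variable R : rcfType.
Local Notation C := (R[i]).
Local Notation toC := (real_complex R).

Lemma toC_real (x : R) : toC x \is Num.real.
Proof. by apply/complex_realP; exists x. Qed.

Lemma conj_toC_mx m n (A : 'M[R]_(m, n)) : (map_mx toC A) ^t* = map_mx toC A^T.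
Proof. by apply/matrixP => i j; rewrite !mxE; apply: conj_Creal; exact: toC_real. Qed.

Lemma herm_of_sym k (M : 'M[R]_k) : M^T = M -> map_mx toC M \is hermsymmx.
Proof. by move=> hM; apply/is_hermitianmxP; rewrite expr0 scale1r conj_toC_mx hM. Qed.

Lemma char_toC n (A : 'M[R]_n) s : char_poly A = \prod_(x <- s) ('X - x%:P) ->
  char_poly (map_mx toC A) = \prod_(y <- map toC s) ('X - y%:P).
Proof.
move=> h; rewrite -map_char_poly h rmorph_prod big_map.
by apply: eq_bigr => x _; exact: map_polyXsubC.
Qed.

Lemma split_sym k (M : 'M[R]_k) : M^T = M ->
  exists s : seq R, char_poly M = \prod_(x <- s) ('X - x%:P).
Proof.
move=> hM; have hMC := herm_of_sym hM.
exists [seq complex.Re (spectral_diag (map_mx toC M) 0 j) | j <- enum 'I_k].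
apply: (@map_poly_inj _ _ toC); rewrite map_char_poly char_poly_spec //.
rewrite rmorph_prod big_map big_enum /=; apply: eq_bigr => j _.
set dj := spectral_diag _ 0 j.
have -> : map_poly toC ('X - (complex.Re dj)%:P) = 'X - (toC (complex.Re dj))%:P.
  exact: map_polyXsubC.
by rewrite RRe_real // dreal.
Qed.

Lemma count_pos (s : seq R) :
  count (fun y : C => 0 < 1 * y) (map toC s) = count (fun x => 0 < x) s.
Proof. by rewrite count_map; apply: eq_count => x /=; rewrite mul1r -ltcR. Qed.

Lemma count_neg (s : seq R) :
  count (fun y : C => 0 < -1 * y) (map toC s) = count (fun x => x < 0) s.
Proof.
by rewrite count_map; apply: eq_count => x /=; rewrite mulN1r oppr_gt0 -ltcR.
Qed.

Lemma count3 (s : seq R) :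
  (count (fun x => (0 < x)%R) s + count (fun x => (x < 0)%R) s +
   count (fun x => x == 0%R) s)%N
  = size s.
Proof.
elim: s => //= x s IH; case: (ltrgtP x 0) => h /=; rewrite -IH; lia.
Qed.

End Real.

Lemma gram_unit (R : realFieldType) n k (B : 'M[R]_(n, k)) :
  row_free B^T -> B^T *m B \in unitmx.
Proof.
move=> fB; rewrite -row_free_unit; apply: inj_row_free => v hv.
apply/eqP; rewrite -(mulmx_free_eq0 _ fB).
have : ((v *m B^T) *m (v *m B^T)^T) 0 0 = 0.
  by rewrite trmx_mul trmxK !mulmxA -(mulmxA v) hv mul0mx mxE.
move: (v *m B^T) => w; rewrite mxE => /eqP.
rewrite psumr_eq0; last by move=> j _; rewrite mxE -expr2 sqr_ge0.
move=> /allP h; apply/eqP/rowP => j; rewrite mxE.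
have := h j (mem_index_enum j); rewrite /= mxE mulf_eq0 orbb => /eqP //.
Qed.

End MRL.
Import MRL.

Theorem corollary2 (R : rcfType) (n k l : nat)
  (src dst : 'I_(k + l) -> 'I_n) (w : 'I_(k + l) -> R)
  (c np nn nz : nat) :
  (forall e, src e != dst e) ->
  (forall e, w e != 0) ->
  c = n_comp (adj src dst predT) predT ->
  (* F is acyclic *)
  ~ has_cycle src dst (fun e => (e < k)%N) ->
  (* F contains a spanning tree of each component of G *)
  (forall x y, connect (adj src dst (fun e => (e < k)%N)) x y =
               connect (adj src dst predT) x y) ->
  let E : 'M[R]_(n, k + l) := incidence src dst R in
  let W : 'M[R]_(k + l) := diag_mx (\row_j w j) in
  let EF := lsubmx E in
  let EC := rsubmx E in
  let RFC : 'M[R]_(k, k + l) :=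
      row_mx 1%:M (invmx (EF^T *m EF) *m EF^T *m EC) in
  eig_inertia (E *m W *m E^T) np nn nz ->
  eig_inertia (RFC *m W *m RFC^T) np nn (nz - c).
Proof.
move=> lf hw hc nc hconn E W EF EC RFC hL.
have EFt : EF = incidence (fun i => src (lshift l i)) (fun i => dst (lshift l i)) R.
  by apply/matrixP => v i; rewrite !mxE.
have freeF : row_free EF^T.
  rewrite EFt; apply: incidence_free => [e|]; first exact: lf.
  move=> [p [es [vs [ies ivs H]]]]; apply: nc.
  exists p, (fun a => lshift l (es a)), vs; split => //.
  - by move=> a b /lshift_inj /ies.
  - by move=> a; have [_ j] := H a; split; [rewrite /= ltn_ord | exact: j].
have rkEF : \rank EF = k by rewrite -mxrank_tr; exact/eqP.
have hsub : (EC^T <= EF^T)%MS := EC_sub R hconn.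
have [D hD] := submxP hsub.
have Gu : EF^T *m EF \in unitmx := gram_unit freeF.
have ECe : EC = EF *m D^T by rewrite -[EC]trmxK hD trmx_mul trmxK.
have EE : E = EF *m RFC.
  rewrite /RFC mul_mx_row mulmx1 -{1}(hsubmxK E); congr row_mx.
  rewrite ECe !mulmxA -(mulmxA _ EF^T EF) -(mulmxA EF (invmx _)) mulVmx //.
  by rewrite mulmx1.
have EFE : EF = E *m col_mx 1%:M 0.
  by rewrite -[E in RHS]hsubmxK mul_row_col mulmx1 mulmx0 addr0.
have rkE : \rank E = k.
  apply/eqP; rewrite eqn_leq; apply/andP; split.
    by have := mxrankM_maxl EF RFC; rewrite -EE rkEF.
  by have := mxrankM_maxl E (col_mx 1%:M 0); rewrite -EFE rkEF.
have kc : k = (n - c)%N by rewrite -rkE hc rank_incidence.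
set M := RFC *m W *m RFC^T.
have hMs : M^T = M by rewrite /M !trmx_mul trmxK tr_diag_mx mulmxA.
set L := E *m W *m E^T.
have hLs : L^T = L by rewrite /L !trmx_mul trmxK tr_diag_mx mulmxA.
have Lrel : L = EF *m M *m EF^T by rewrite /L /M EE !trmx_mul !mulmxA.
case: hL => sL [cL pL nL zL].
have [sM cM] := split_sym hMs.
exists sM.
have eA : map_mx (real_complex R) L =
  map_mx (real_complex R) EF *m map_mx (real_complex R) M *m
  ((map_mx (real_complex R) EF) ^t* )%sesqui.
  by rewrite conj_toC_mx Lrel !map_mxM.
have hG : ((map_mx (real_complex R) EF) ^t* )%sesqui *m map_mx (real_complex R) EF
    \in unitmx.
  by rewrite conj_toC_mx -map_mxM map_unitmx.
have tr eps : eps \is Num.real ->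
   count (fun x => 0 < eps * x) (map (real_complex R) sL) =
   count (fun x => 0 < eps * x) (map (real_complex R) sM).
  move=> he; apply: (inertia_transfer (herm_of_sym hLs) (herm_of_sym hMs) he eA hG).
    exact: char_toC.
  exact: char_toC.
have cp : count (fun x => 0 < x) sM = np.
  by rewrite -pL -!count_pos tr // real1.
have cn : count (fun x => x < 0) sM = nn.
  by rewrite -nL -!count_neg tr // rpredN real1.
have szL : size sL = n.
  by have := size_char_poly L; rewrite cL size_prod_XsubC => [[]].
have szM : size sM = k.
  by have := size_char_poly M; rewrite cM size_prod_XsubC => [[]].
have h1 := count3 sL; have h2 := count3 sM.
split => //.
rewrite pL nL zL szL in h1; rewrite cp cn szM in h2.
lia.
Qed.
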